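(* There is $\delta_0>0$ such that for every $\delta\in(0,\delta_0]$, every $s\ge s_0$ and every $X\in\mathcal X(s)$, $$X\le \alpha_1X+\sum_{l=1}^Le^{(\alpha_1-\alpha_l)s}\Psi_{i_l}\big(e^{(\alpha_l-\alpha_1)s}(X-Y_l(s))\big).$$
   Context: For a positive integer $i$, $\Psi_i:\mathbb R\to\mathbb R$ denotes the odd, strictly decreasing, analytic solution of $-\frac{1}{2i}\Psi_i+\frac{2i+1}{2i}X\Psi_i'(X)+\Psi_i(X)\Psi_i'(X)=0$ satisfying $\Psi_i(X)=-X+X^{2i+1}+O(X^{4i+1})$ as $X\to0$. It satisfies $\Psi_i(X)=-\operatorname{sgn}(X)|X|^{\frac1{2i+1}}+O(|X|^{-1+\frac{2}{2i+1}})$ as $|X|\to\infty$, and $|\Psi_i(X)|\approx |X|(1+|X|)^{\frac1{2i+1}-1}$. Fix an integer $L\ge2$ and positive integers $i_1,\dots,i_L$; let $\alpha_l=1+\frac1{2i_l}$. Let $\delta\in(0,1)$ and $s_0=-\log\delta$. For $l=1,\dots,L$ put $y_{l,0}=3(l-1)\delta^{1/(2i_1)}$, $h_l=\sum_{l'=1}^L\delta^{\frac1{2i_{l'}}}\Big(\Psi_{i_{l'}}\big(\tfrac{y_{l,0}-y_{l',0}}{\delta^{\alpha_{l'}}}\big)-\Psi_{i_{l'}}\big(\tfrac{-y_{l',0}}{\delta^{\alpha_{l'}}}\big)\Big)$, and for $s\ge s_0$ let $Y_l(s)=e^{\alpha_1 s}\big(y_{l,0}+(\delta-e^{-s})h_l\big)$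 (so $Y_1\equiv0$). Let $\mathcal X(s)=\{X\in\mathbb R: e^s\le X\le 2\delta^{1/(2i_1)}e^{\alpha_1 s}\}$. *)

(* Defs.v *)
From Stdlib Require Import Reals Lra.
From Coquelicot Require Import Coquelicot.
Open Scope R_scope.

Definition real_analytic (f : R -> R) : Prop :=
  forall x0 : R, exists (a : nat -> R) (r : R), 0 < r /\
    forall x, Rabs (x - x0) < r -> is_pseries a (x - x0) (f x).

Definition is_Psi (i : nat) (f : R -> R) : Prop :=
  (forall X, f (- X) = - f X) /\
  (forall x y, x < y -> f y < f x) /\
  real_analytic f /\
  (forall X, ex_derive f X /\
     - / (2 * INR i) * f X + (2 * INR i + 1) / (2 * INR i) * X * Derive f X
       + f X * Derive f X = 0) /\
  (exists C eps, 0 < eps /\ forall X, Rabs X < eps ->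
     Rabs (f X - (- X + X ^ (2 * i + 1))) <= C * Rabs X ^ (4 * i + 1)).

Definition alpha (i : nat -> nat) (l : nat) : R := 1 + / (2 * INR (i l)).

Definition y0 (i : nat -> nat) (delta : R) (l : nat) : R :=
  3 * (INR l - 1) * Rpower delta (/ (2 * INR (i 1%nat))).

Definition hh (Psi : nat -> R -> R) (L : nat) (i : nat -> nat) (delta : R)
  (l : nat) : R :=
  sum_n_m (fun l' : nat =>
    Rpower delta (/ (2 * INR (i l'))) *
    (Psi (i l') ((y0 i delta l - y0 i delta l') / Rpower delta (alpha i l'))
     - Psi (i l') ((- y0 i delta l') / Rpower delta (alpha i l')))) 1 L.

Definition Yl (Psi : nat -> R -> R) (L : nat) (i : nat -> nat) (delta : R)
  (l : nat) (s : R) : R :=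
  exp (alpha i 1 * s) *
  (y0 i delta l + (delta - exp (- s)) * hh Psi L i delta l).

Definition Xset (i : nat -> nat) (delta s X : R) : Prop :=
  exp s <= X <= 2 * Rpower delta (/ (2 * INR (i 1%nat))) * exp (alpha i 1 * s).

(* Main.v *)
From Stdlib Require Import Reals Lra Lia.
From Coquelicot Require Import Coquelicot.
Require Import Defs.
Open Scope R_scope.

Lemma psi0 k f : is_Psi k f -> f 0 = 0.
Proof. intros [Ho _]. specialize (Ho 0). rewrite Ropp_0 in Ho. lra. Qed.

Lemma psi_neg k f : is_Psi k f -> forall X, 0 < X -> f X < 0.
Proof. intros H X HX. pose proof (psi0 _ _ H). destruct H as [_ [Hd _]].
  specialize (Hd 0 X HX). lra. Qed.

Lemma psi_pos k f : is_Psi k f -> forall X, X <= 0 -> 0 <= f X.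
Proof. intros H X HX. pose proof (psi0 _ _ H). destruct H as [_ [Hd _]].
  destruct (Req_dec X 0). subst; lra. specialize (Hd X 0 ltac:(lra)). lra. Qed.

Lemma psi_key k f : (1 <= k)%nat -> is_Psi k f ->
  exists c, c < 0 /\ forall X, 0 < X -> X + f X = c * f X ^ (2*k+1).
Proof.
  intros Hk HP. pose proof (psi_neg _ _ HP) as Hneg.
  destruct HP as [Ho [Hd [_ [Hode [C [eps [Heps Has]]]]]]].
  set (n := (2*k+1)%nat).
  set (H := fun x => (x + f x) / f x ^ n).
  assert (Hnz : forall x, 0 < x -> f x ^ n <> 0).
  { intros x Hx. apply pow_nonzero. specialize (Hneg x Hx). lra. }
  assert (HkR : 1 <= INR k) by (apply (le_INR 1); auto).
  assert (Hder : forall x, 0 < x -> is_derive H x 0).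
  { intros x Hx. destruct (Hode x) as [Hex Heq].
    pose proof (Derive_correct _ _ Hex) as Hf.
    assert (Hn : is_derive (fun t => t + f t) x (1 + Derive f x)).
    { exact (is_derive_plus (fun t => t) f x _ _ (is_derive_id x) Hf). }
    pose proof (is_derive_div _ _ x _ _ Hn (is_derive_pow f n x _ Hf) (Hnz x Hx)) as Hq.
    unfold H. eapply is_derive_ext. intro; reflexivity.
    replace 0 with (((1 + Derive f x) * f x ^ n - (x + f x) * (INR n * Derive f x * f x ^ Init.Nat.pred n)) / (f x ^ n) ^ 2).
    exact Hq.
    unfold n. replace (Init.Nat.pred (2*k+1)) with (2*k)%nat by lia.
    rewrite pow_add, pow_1. rewrite plus_INR, mult_INR. simpl INR.
    set (p := f x ^ (2*k)). set (d := Derive f x). set (y := f x).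
    fold d y in Heq.
    assert (E: (1 + d) * (p * y) - (x + y) * ((2 * INR k + 1) * d * p) = 0).
    { assert (E2: y - (2*INR k+1)*x*d - 2*INR k*y*d = 0).
      { apply (Rmult_eq_reg_l (- / (2 * INR k))). 2: { apply Ropp_neq_0_compat. apply Rinv_neq_0_compat. lra. }
        rewrite Rmult_0_r. rewrite <- Heq. field. lra. }
      replace ((1 + d) * (p * y) - (x + y) * ((2 * INR k + 1) * d * p)) with
        (p * (y - (2*INR k+1)*x*d - 2*INR k*y*d)) by ring. rewrite E2. ring. }
    replace ((1+1) * INR k) with (2 * INR k) by ring. rewrite E. unfold Rdiv. ring. }
  assert (Hconst : forall a b, 0 < a -> 0 < b -> H a = H b).
  { intros a b Ha Hb.
    destruct (MVT_gen H a b (fun _ => 0)) as [c [Hc Hm]].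
    - intros x Hx. apply Hder. assert (0 < Rmin a b) by (apply Rmin_glb_lt; auto). lra.
    - intros x Hx. assert (0 < Rmin a b) by (apply Rmin_glb_lt; auto).
      apply continuity_pt_filterlim. apply (ex_derive_continuous H).
      exists 0. apply Hder. lra.
    - lra. }
  set (x0 := Rmin (eps/2) (/ (Rabs C + 2))).
  assert (Hx0p : 0 < x0).
  { unfold x0. apply Rmin_glb_lt. lra. apply Rinv_0_lt_compat. pose proof (Rabs_pos C). lra. }
  assert (Hx0e : x0 < eps).
  { unfold x0. pose proof (Rmin_l (eps/2) (/ (Rabs C + 2))). lra. }
  assert (Hx0C : x0 * (Rabs C + 2) <= 1).
  { unfold x0. pose proof (Rmin_r (eps/2) (/ (Rabs C + 2))). pose proof (Rabs_pos C).
    replace 1 with (/ (Rabs C + 2) * (Rabs C + 2)) by (field; lra).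
    apply Rmult_le_compat_r; lra. }
  assert (Hpos : 0 < x0 + f x0).
  { specialize (Has x0). rewrite Rabs_pos_eq in Has by lra. specialize (Has Hx0e).
    apply Rabs_le_between in Has.
    assert (Hx1 : x0 < 1). { pose proof (Rabs_pos C). nra. }
    set (q := x0 ^ (2*k+1)).
    assert (Hq : 0 < q) by (apply pow_lt; lra).
    replace (x0 ^ (4*k+1)) with (q * x0 ^ (2*k)) in Has.
    2:{ unfold q. rewrite <- pow_add. f_equal. lia. }
    assert (Hp : x0 ^ (2*k) <= x0).
    { replace (2*k)%nat with (S (2*k-1)) by lia. rewrite <- tech_pow_Rmult.
      assert (0 <= x0 ^ (2*k-1) <= 1). { split. apply pow_le; lra. rewrite <- (pow1 (2*k-1)). apply pow_incr; lra. } nra. }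
    assert (Hpp : 0 <= x0 ^ (2*k)) by (apply pow_le; lra).
    assert (C * (q * x0 ^ (2*k)) <= Rabs C * (q * x0)).
    { pose proof (Rle_abs C). pose proof (Rabs_pos C). 
      apply Rle_trans with (Rabs C * (q * x0 ^ (2*k))). apply Rmult_le_compat_r. nra. lra.
      apply Rmult_le_compat_l. lra. nra. }
    assert (Rabs C * x0 < 1) by (pose proof (Rabs_pos C); nra). assert (Rabs C * (q * x0) < q) by (replace (Rabs C * (q * x0)) with (q * (Rabs C * x0)) by ring; rewrite <- (Rmult_1_r q) at 2; apply Rmult_lt_compat_l; lra). fold q in Has; lra. }
  exists (H x0). split.
  - unfold H. assert (Hy : f x0 ^ n < 0).
    { unfold n. rewrite pow_add, pow_1, pow_mult. specialize (Hneg x0 Hx0p).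
      assert (0 < (f x0 ^ 2) ^ k) by (apply pow_lt; nra). nra. }
    unfold Rdiv. pose proof (Rinv_lt_0_compat _ Hy). nra.
  - intros X HX. rewrite (Hconst x0 X Hx0p HX). unfold H. field. apply Hnz; auto.
Qed.

Lemma exp_pow_n x n : exp x ^ n = exp (INR n * x).
Proof. induction n. simpl. rewrite Rmult_0_l, exp_0. auto.
  rewrite <- tech_pow_Rmult, IHn, S_INR, <- exp_plus. f_equal. ring. Qed.

Lemma exp_le_mono x y : x <= y -> exp x <= exp y.
Proof. intros [H|H]. left; apply exp_increasing; auto. subst; lra. Qed.

Lemma term_bound (f : R -> R) (k i1 L : nat) kap :
  (1<=k)%nat -> (1<=i1)%nat -> (1<=L)%nat -> 0<kap ->
  (forall z, kap * Rabs (f z) ^ (2*k+1) <= Rabs z) ->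
  exists d1, 0<d1 /\ forall del, 0<del<1 -> del<=d1 -> forall w,
    Rabs w <= 3 * INR L * Rpower del (/(2*INR i1)) / Rpower del (1 + /(2*INR k)) ->
    Rpower del (1 + /(2*INR k)) * Rabs (f w) <= Rpower del (/(2*INR i1)) / (2 * INR L).
Proof.
  intros Hk Hi1 HL Hkap Hf.
  assert (HkR : 1 <= INR k) by (apply (le_INR 1); auto).
  assert (HjR : 1 <= INR i1) by (apply (le_INR 1); auto).
  assert (HLR : 1 <= INR L) by (apply (le_INR 1); auto).
  set (n := (2*k+1)%nat).
  set (K := 3 * INR L * (2 * INR L) ^ n).
  assert (HK : 0 < K). { unfold K. apply Rmult_lt_0_compat. lra. apply pow_lt; lra. }
  exists (kap / (2*K)). split. { apply Rdiv_lt_0_compat; lra. }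
  intros del Hdel Hdel1 w Hw.
  set (lam := ln del).
  assert (Hlam : lam < 0). { unfold lam. rewrite <- ln_1. apply ln_increasing; lra. }
  set (d := Rpower del (/(2*INR i1))) in *.
  set (P := Rpower del (1 + /(2*INR k))) in *.
  assert (Hd : 0 < d) by (unfold d, Rpower; apply exp_pos).
  assert (HP : 0 < P) by (unfold P, Rpower; apply exp_pos).
  set (u := Rabs (f w)).
  assert (Hu : 0 <= u) by apply Rabs_pos.
  destruct (Rle_lt_dec (P*u) (d/(2*INR L))) as [Hok|Hbad]; [exact Hok|exfalso].
  set (t := d/(2*INR L)).
  assert (Ht : 0 < t) by (unfold t; apply Rdiv_lt_0_compat; lra).
  assert (Hut : t / P <= u). { apply Rmult_le_reg_l with P. auto. unfold t in *. field_simplify; lra. }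
  assert (H1 : kap * (t/P)^n <= 3 * INR L * d / P).
  { apply Rle_trans with (kap * u ^ n).
    apply Rmult_le_compat_l. lra. apply pow_incr. split. apply Rdiv_le_0_compat; lra. auto.
    apply Rle_trans with (Rabs w). apply Hf. auto. }
  assert (Hdk : d ^ (2*k) = exp (INR (2*k) * (/(2*INR i1) * lam))).
  { unfold d, Rpower. apply exp_pow_n. }
  assert (HPk : P ^ (2*k) = exp (INR (2*k) * ((1 + /(2*INR k)) * lam))).
  { unfold P, Rpower. apply exp_pow_n. }
  set (Q := exp (INR (2*k) * ((1 + /(2*INR k)) * lam) - INR (2*k) * (/(2*INR i1) * lam))).
  assert (HPQ : P ^ (2*k) = d ^ (2*k) * Q).
  { rewrite HPk, Hdk. unfold Q. rewrite <- exp_plus. f_equal. ring. }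
  assert (HQ : Q <= del).
  { unfold Q. replace del with (exp lam) by (unfold lam; apply exp_ln; lra).
    apply exp_le_mono. rewrite mult_INR. replace (INR 2) with 2 by (simpl; ring).
    replace (2 * INR k * ((1 + / (2 * INR k)) * lam) - 2 * INR k * (/ (2 * INR i1) * lam))
      with (lam * (2 * INR k + 1 - INR k / INR i1)) by (field; lra).
    assert (INR k / INR i1 <= INR k).
    { unfold Rdiv. rewrite <- (Rmult_1_r (INR k)) at 2. apply Rmult_le_compat_l. lra.
      rewrite <- Rinv_1. apply Rinv_le_contravar; lra. }
    assert (0 <= INR k / INR i1) by (apply Rdiv_le_0_compat; lra).
    set (r := INR k / INR i1) in *.
    assert (0 <= 2 * INR k + 1 - r - 1) by lra.
    assert (lam * (2 * INR k + 1 - r - 1) <= 0) by (rewrite <- (Rmult_0_l (2 * INR k + 1 - r - 1)); apply Rmult_le_compat_r; lra).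
    lra. }
  assert (HQp : 0 < Q) by apply exp_pos.
  set (D2 := d ^ (2*k)) in *. set (P2 := P ^ (2*k)) in *.
  assert (HD2 : 0 < D2) by (apply pow_lt; auto).
  assert (Htn : (t/P)^n = d * D2 / ((2*INR L)^n * (P * P2))).
  { unfold t, n. assert (HLL : 2 * INR L <> 0) by lra. set (LL := 2 * INR L) in *. unfold Rdiv. rewrite !Rpow_mult_distr, !pow_inv, (pow_add d), (pow_add P), !pow_1.
    fold D2 P2. field. repeat split; try lra; try (apply pow_nonzero; lra).
    all: try (rewrite HPQ; apply Rgt_not_eq; apply Rmult_lt_0_compat; auto). }
  rewrite Htn in H1.
  assert (HLn : 0 < (2*INR L)^n) by (apply pow_lt; lra).
  assert (HP2 : 0 < P2) by (rewrite HPQ; apply Rmult_lt_0_compat; auto).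
  assert (H3 : kap * D2 <= K * P2).
  { unfold K. apply Rmult_le_reg_r with (d / ((2*INR L)^n * (P*P2))).
    apply Rdiv_lt_0_compat. auto. apply Rmult_lt_0_compat; auto. apply Rmult_lt_0_compat; auto.
    replace (kap * D2 * (d / ((2 * INR L) ^ n * (P * P2)))) with (kap * (d * D2 / ((2 * INR L) ^ n * (P * P2)))) by (field; lra).
    replace (3 * INR L * (2 * INR L) ^ n * P2 * (d / ((2 * INR L) ^ n * (P * P2)))) with (3 * INR L * d / P) by (field; lra).
    exact H1. }
  rewrite HPQ in H3.
  assert (kap <= K * Q). { apply Rmult_le_reg_r with D2. auto. lra. }
  assert (K * Q <= K * (kap / (2*K))). { apply Rmult_le_compat_l; lra. }
  assert (K * (kap / (2*K)) = kap / 2) by (field; lra).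
  lra.
Qed.

Lemma finmin (Pr : nat -> R -> Prop) :
  (forall l x y, Pr l x -> 0<y -> y<=x -> Pr l y) -> forall L,
  (forall l, (1<=l<=L)%nat -> exists x, 0<x /\ Pr l x) ->
  exists x, 0<x /\ forall l, (1<=l<=L)%nat -> Pr l x.
Proof.
  intros Hm L. induction L; intros H.
  - exists 1. split. lra. intros; lia.
  - destruct IHL as [x1 [Hx1 H1]]. { intros l Hl. apply H. lia. }
    destruct (H (S L)) as [x2 [Hx2 H2]]. lia.
    exists (Rmin x1 x2). split. apply Rmin_glb_lt; auto.
    intros l Hl. destruct (Nat.eq_dec l (S L)).
    + subst. apply Hm with x2; auto. apply Rmin_glb_lt; auto. apply Rmin_r.
    + apply Hm with x1. apply H1; lia. apply Rmin_glb_lt; auto. apply Rmin_l.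
Qed.

Lemma sum_ge (a : nat -> R) c n m : (n <= m)%nat ->
  (forall l, (n<=l<=m)%nat -> c <= a l) -> INR (S m - n) * c <= sum_n_m a n m.
Proof.
  induction m; intros Hnm H.
  - assert (n = 0%nat) by lia. subst. rewrite sum_n_n. simpl. specialize (H 0%nat ltac:(lia)). lra.
  - destruct (Nat.eq_dec n (S m)).
    + subst. rewrite sum_n_n. replace (S (S m) - S m)%nat with 1%nat by lia. simpl.
      specialize (H (S m) ltac:(lia)). lra.
    + rewrite sum_n_Sm by lia. change (plus ?x ?y) with (x + y).
      replace (S (S m) - n)%nat with (S (S m - n)) by lia. rewrite S_INR.
      specialize (IHm ltac:(lia) ltac:(intros; apply H; lia)).
      specialize (H (S m) ltac:(lia)). lra.
Qed.

Lemma sum_zero (a : nat -> R) n m : (forall l, a l = 0) -> sum_n_m a n m = 0.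
Proof.
  intros H. rewrite (sum_n_m_ext a (fun _ => zero)) by (intros; rewrite H; reflexivity).
  exact (@sum_n_m_const_zero R_AbelianMonoid n m).
Qed.
Lemma psi_kappa k f : (1 <= k)%nat -> is_Psi k f ->
  exists kap, 0 < kap /\ forall z, Rabs (f z) <= Rabs z /\ kap * Rabs (f z) ^ (2*k+1) <= Rabs z.
Proof.
  intros Hk HP. destruct (psi_key k f Hk HP) as [c [Hc Hrel]].
  pose proof (psi_neg _ _ HP) as Hneg. pose proof (psi0 _ _ HP) as H0.
  assert (Hodd : forall z, f (- z) = - f z) by apply HP.
  exists (- c). split. lra.
  assert (Hpos : forall z, 0 < z -> Rabs (f z) <= Rabs z /\ - c * Rabs (f z) ^ (2*k+1) <= Rabs z).
  { intros z Hz. specialize (Hneg z Hz). specialize (Hrel z Hz).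
    rewrite (Rabs_left (f z)) by lra. rewrite (Rabs_pos_eq z) by lra.
    assert (E : f z ^ (2*k+1) = - ((- f z) ^ (2*k+1))).
    { rewrite pow_add, pow_1, pow_mult, pow_add, pow_1, pow_mult.
      replace ((- f z)^2) with (f z ^ 2) by ring. ring. }
    assert (0 < (- f z) ^ (2*k+1)) by (apply pow_lt; lra).
    rewrite E in Hrel. split; nra. }
  intros z. destruct (Rtotal_order z 0) as [Hz|[Hz|Hz]].
  - specialize (Hpos (- z) ltac:(lra)). rewrite Hodd, !Rabs_Ropp in Hpos. exact Hpos.
  - subst. rewrite H0, Rabs_R0. rewrite pow_i by lia. lra.
  - apply Hpos; auto.
Qed.

Lemma lowA f k kap : (1 <= k)%nat -> 0 < kap ->
  (forall z, kap * Rabs (f z) ^ (2*k+1) <= Rabs z) -> (forall X, 0 < X -> f X < 0) ->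
  forall X, 1 <= X -> (2 * INR k) ^ (2*k+1) / kap < X -> - (X / (2 * INR k)) <= f X.
Proof.
  intros Hk Hkap Hb Hneg X HX1 HX2.
  assert (HkR : 1 <= INR k) by (apply (le_INR 1); auto).
  specialize (Hb X). specialize (Hneg X ltac:(lra)).
  rewrite Rabs_left in Hb by lra. rewrite Rabs_pos_eq in Hb by lra.
  destruct (Rle_lt_dec (- (X / (2 * INR k))) (f X)) as [h|h]; auto. exfalso.
  assert (h1 : (X / (2 * INR k)) ^ (2*k+1) <= (- f X) ^ (2*k+1)).
  { apply pow_incr. split. apply Rdiv_le_0_compat; lra. lra. }
  assert (h2 : X ^ 2 <= X ^ (2*k+1)) by (apply Rle_pow; auto; lia).
  assert (HM : 0 < (2 * INR k) ^ (2*k+1)) by (apply pow_lt; lra).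
  unfold Rdiv in h1. rewrite Rpow_mult_distr, pow_inv in h1.
  set (M := (2 * INR k) ^ (2*k+1)) in *.
  assert (kap * (X ^ 2 * / M) <= X).
  { apply Rle_trans with (kap * (X ^ (2*k+1) * / M)).
    apply Rmult_le_compat_l. lra. apply Rmult_le_compat_r.
    left; apply Rinv_0_lt_compat; auto. auto.
    apply Rle_trans with (kap * (- f X) ^ (2*k+1)). apply Rmult_le_compat_l; lra. auto. }
  assert (M / kap < X) by auto.
  assert (M < X * kap). { apply Rmult_lt_reg_r with (/ kap). apply Rinv_0_lt_compat; auto.
    replace (X * kap * / kap) with X by (field; lra). auto. }
  assert (kap * X ^ 2 <= X * M).
  { apply Rmult_le_reg_r with (/ M). apply Rinv_0_lt_compat; auto.
    replace (X * M * / M) with X by (field; lra). lra. }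
  simpl in *. nra.
Qed.

Theorem lemma4p5 :
  forall (Psi : nat -> R -> R),
  (forall k : nat, (1 <= k)%nat -> is_Psi k (Psi k)) ->
  forall (L : nat) (i : nat -> nat),
  (2 <= L)%nat ->
  (forall l : nat, (1 <= l <= L)%nat -> (1 <= i l)%nat) ->
  exists delta0 : R, 0 < delta0 /\
    forall delta : R, 0 < delta < 1 -> delta <= delta0 ->
    forall s : R, - ln delta <= s ->
    forall X : R, Xset i delta s X ->
      X <= alpha i 1 * X +
        sum_n_m (fun l : nat =>
          exp ((alpha i 1 - alpha i l) * s) *
          Psi (i l) (exp ((alpha i l - alpha i 1) * s) *
                     (X - Yl Psi L i delta l s))) 1 L.
Proof.
  intros Psi HPsi L i HL Hi.
  assert (Hi1 : (1 <= i 1%nat)%nat) by (apply Hi; lia).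
  assert (HLR : 2 <= INR L) by (apply (le_INR 2); auto).
  destruct (psi_kappa _ _ Hi1 (HPsi _ Hi1)) as [k1 [Hk1 HB1]].
  set (Pr := fun l x => forall del, 0<del<1 -> del<=x -> forall w,
    Rabs w <= 3 * INR L * Rpower del (/(2*INR (i 1%nat))) / Rpower del (alpha i l) ->
    Rpower del (alpha i l) * Rabs (Psi (i l) w) <= Rpower del (/(2*INR (i 1%nat))) / (2 * INR L)).
  destruct (finmin Pr) with (L := L) as [dB [HdB HB]].
  { intros l x y H Hy Hyx del Hd Hdy. apply H; auto. lra. }
  { intros l Hl. destruct (psi_kappa _ _ (Hi l Hl) (HPsi _ (Hi l Hl))) as [kap [Hkap HBl]].
    apply (term_bound (Psi (i l)) (i l) (i 1%nat) L kap (Hi l Hl) Hi1 ltac:(lia) Hkap).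
    intros z; apply HBl. }
  set (m := INR (i 1%nat)).
  assert (Hm : 1 <= m) by (apply (le_INR 1); auto).
  set (MA := (2*m)^(2*(i 1%nat)+1)).
  assert (HMA : 0 < MA) by (apply pow_lt; lra).
  exists (Rmin (Rmin dB (k1/(2*MA))) (1/2)).
  split. { apply Rmin_glb_lt. apply Rmin_glb_lt; auto. apply Rdiv_lt_0_compat; lra. lra. }
  intros del Hdel Hdel0 s Hs X [HX1 HX2].
  assert (HdB' : del <= dB).
  { pose proof (Rmin_l (Rmin dB (k1/(2*MA))) (1/2)). pose proof (Rmin_l dB (k1/(2*MA))). lra. }
  assert (HdA : del <= k1/(2*MA)).
  { pose proof (Rmin_l (Rmin dB (k1/(2*MA))) (1/2)). pose proof (Rmin_r dB (k1/(2*MA))). lra. }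
  assert (Hes : / del <= exp s).
  { rewrite <- (exp_ln del) by lra. rewrite <- exp_Ropp. apply exp_le_mono. lra. }
  assert (Hems : exp (- s) <= del).
  { rewrite <- (exp_ln del) by lra. apply exp_le_mono. lra. }
  assert (Hemp : 0 < exp (- s)) by apply exp_pos.
  assert (Hinv1 : 1 < / del). { rewrite <- Rinv_1. apply Rinv_lt_contravar; lra. }
  assert (Hinv2 : 2 * MA / k1 <= / del).
  { replace (2 * MA / k1) with (/ (k1 / (2 * MA))) by (field; lra).
    apply Rinv_le_contravar; lra. }
  assert (HT1 : - (X / (2 * m)) <= Psi (i 1%nat) X).
  { apply (lowA (Psi (i 1%nat)) (i 1%nat) k1 Hi1 Hk1).
    intros z; apply HB1. apply psi_neg with (i 1%nat). apply HPsi; auto. lra.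
    fold m. fold MA. assert (MA / k1 < 2 * MA / k1). { unfold Rdiv. 
      apply Rmult_lt_compat_r. apply Rinv_0_lt_compat; auto. lra. } lra. }
  rewrite (sum_n_m_Chasles _ 1 1 L) by lia. rewrite sum_n_n.
  change (plus ?x ?y) with (x + y).
  set (d := Rpower del (/ (2 * INR (i 1%nat)))) in *.
  assert (Hd : 0 < d) by (unfold d, Rpower; apply exp_pos).
  assert (HY1 : Yl Psi L i del 1 s = 0).
  { unfold Yl, hh. rewrite sum_zero.
    - unfold y0. simpl (INR 1). ring.
    - intros l'. unfold y0 at 1. simpl (INR 1). replace (3 * (1 - 1) * Rpower del (/ (2 * INR (i 1%nat)))) with 0 by ring.
      rewrite Rminus_0_l. ring. }
  rewrite HY1, Rminus_diag, Rmult_0_l, exp_0, Rmult_1_l, Rmult_1_l, Rminus_0_r.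
  assert (HS2 : 0 <= sum_n_m (fun l : nat =>
          exp ((alpha i 1 - alpha i l) * s) *
          Psi (i l) (exp ((alpha i l - alpha i 1) * s) *
                     (X - Yl Psi L i del l s))) 2 L).
  { replace 0 with (INR (S L - 2) * 0) by ring. apply sum_ge. lia.
    intros l Hl. apply Rmult_le_pos. left; apply exp_pos.
    apply psi_pos with (i l). apply HPsi, Hi; lia.
    cut (X - Yl Psi L i del l s <= 0).
    { intros. assert (0 < exp ((alpha i l - alpha i 1) * s)) by apply exp_pos. nra. }
    set (E := exp (alpha i 1 * s)) in *.
    assert (HE : 0 < E) by apply exp_pos.
    set (h := hh Psi L i del l).
    assert (Hh : - d <= del * h).
    { assert (Hsum : INR (S L - 1) * (- d / (INR L * del)) <= h).
      { apply sum_ge. lia. intros l' Hl'.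
        set (P := Rpower del (alpha i l')).
        assert (HP : P = del * Rpower del (/ (2 * INR (i l')))).
        { unfold P, alpha. rewrite Rpower_plus, Rpower_1 by lra. reflexivity. }
        assert (HPp : 0 < P) by (unfold P, Rpower; apply exp_pos).
        assert (Hlr : 1 <= INR l <= INR L) by (split; [apply (le_INR 1) | apply le_INR]; lia).
        assert (Hlr' : 1 <= INR l' <= INR L) by (split; [apply (le_INR 1) | apply le_INR]; lia).
        assert (Ha : P * Rabs (Psi (i l') ((y0 i del l - y0 i del l') / P)) <= d / (2 * INR L)).
        { apply (HB l' ltac:(lia) del ltac:(lra) HdB'). fold d. fold P.
          unfold Rdiv. rewrite Rabs_mult, Rabs_inv, (Rabs_pos_eq P) by lra.
          apply Rmult_le_compat_r. left; apply Rinv_0_lt_compat; auto.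
          unfold y0. fold d. 
          replace (3 * (INR l - 1) * d - 3 * (INR l' - 1) * d) with ((3 * d) * (INR l - INR l')) by ring.
          rewrite Rabs_mult, Rabs_pos_eq by lra.
          replace (3 * INR L * d) with (3 * d * INR L) by ring.
          apply Rmult_le_compat_l. lra. apply Rabs_le; lra. }
        assert (Hb : P * Rabs (Psi (i l') (- y0 i del l' / P)) <= d / (2 * INR L)).
        { apply (HB l' ltac:(lia) del ltac:(lra) HdB'). fold d. fold P.
          unfold Rdiv. rewrite Rabs_mult, Rabs_inv, (Rabs_pos_eq P) by lra.
          apply Rmult_le_compat_r. left; apply Rinv_0_lt_compat; auto.
          unfold y0. fold d. rewrite Rabs_Ropp, Rabs_pos_eq by nra. nra. }
        set (q := Rpower del (/ (2 * INR (i l')))) in *.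
        assert (Hq : 0 < q) by (unfold q, Rpower; apply exp_pos).
        fold P.
        set (A := Psi (i l') ((y0 i del l - y0 i del l') / P)) in *.
        set (B := Psi (i l') (- y0 i del l' / P)) in *.
        pose proof (Rle_abs (- A)). pose proof (Rle_abs B). rewrite Rabs_Ropp in *.
        assert (Hk : del * q * (Rabs A + Rabs B) <= d / INR L).
        { rewrite <- HP. replace (d / INR L) with (d / (2 * INR L) + d / (2 * INR L)) by (field; lra). lra. }
        assert (Hk2 : q * (A - B) >= - (d / INR L) / del).
        { apply Rle_ge. apply Rmult_le_reg_l with del. lra.
          replace (del * (- (d / INR L) / del)) with (- (d / INR L)) by (field; lra).
          assert (0 <= del * q * (A - B + (Rabs A + Rabs B))) by (apply Rmult_le_pos; [nra | lra]).
          nra. }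
        replace (- d / (INR L * del)) with (- (d / INR L) / del) by (field; lra). lra. }
      replace (S L - 1)%nat with L in Hsum by lia.
      replace (INR L * (- d / (INR L * del))) with (- d / del) in Hsum by (field; lra).
      apply Rmult_le_reg_l with (/ del). apply Rinv_0_lt_compat; lra.
      replace (/ del * (del * h)) with h by (field; lra). unfold Rdiv in Hsum. lra. }
    assert (Hh2 : - d <= (del - exp (- s)) * h).
    { destruct (Rle_lt_dec 0 h). nra. nra. }
    assert (Hy : 3 * d <= y0 i del l).
    { unfold y0. fold d. assert (2 <= INR l) by (apply (le_INR 2); lia). nra. }
    unfold Yl. fold E. fold h. nra. }
  unfold alpha at 1. fold m.
  replace (- (X / (2 * m))) with (- (/ (2 * m) * X)) in HT1 by (field; lra).
  lra.
Qed.
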